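(* Let $2<\alpha<4$ and $0<N_1\le N_2$. Consider the two-player Random Access Game in which player $i\in\{1,2\}$ chooses $\Lambda_i\in[0,N_i]$ and receives payoff \[ U_i(\Lambda_1,\Lambda_2)=\sup_{\beta>0}\ \Lambda_i\log(1+\beta)\,e^{-(\Lambda_1+\Lambda_2)\beta^{2/\alpha}} . \] Then this game has a unique Nash equilibrium $(\Lambda_1^*,\Lambda_2^* )$; it is given by $\Lambda_1^*=N_1$ and $\Lambda_2^*=\min(x,N_2)$, where $x$ is the solution of \[ N_1=x\left(\frac{\alpha}{2\left(1+x^{\alpha/2}\right)\log\left(1+x^{-\alpha/2}\right)}-1\right). \]
   Context: A Nash equilibrium is a pair $(\Lambda_1^*,\Lambda_2^* )\in[0,N_1]\times[0,N_2]$ such that $\Lambda_1^*$ maximizes $U_1(\cdot,\Lambda_2^* )$ over $[0,N_1]$ and $\Lambda_2^*$ maximizes $U_2(\Lambda_1^*,\cdot)$ over $[0,N_2]$. Here $N_i$ is the average number of nodes per transmission disc of network $i$, $\Lambda_i$ is its average number of simultaneous transmissions per disc, and $\log$ is the natural logarithm. *)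

(* Defs.v *)
From HB Require Import structures.
From mathcomp Require Import all_boot all_order all_algebra.
From mathcomp Require Import all_classical all_reals all_analysis.
Set Implicit Arguments. Unset Strict Implicit. Unset Printing Implicit Defensive.
Import Order.TTheory GRing.Theory Num.Theory.
Local Open Scope classical_set_scope.
Local Open Scope ring_scope.

(* Payoff of a player with own transmission intensity [Li] when the total
   intensity is [L1 + L2]:
   sup_{beta > 0} Li * log(1+beta) * exp(-(L1+L2) * beta^(2/alpha)).
   (This set is always bounded above: if Li = 0 it is {0}, otherwise
   L1 + L2 > 0.) *)
Definition rag_payoff (R : realType) (alpha Li L1 L2 : R) : R :=
  sup [set y : R | exists2 b : R, 0 < b &
        y = Li * ln (1 + b) * expR (- (L1 + L2) * b `^ (2 / alpha))].

Definition U1 (R : realType) (alpha L1 L2 : R) : R := rag_payoff alpha L1 L1 L2.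
Definition U2 (R : realType) (alpha L1 L2 : R) : R := rag_payoff alpha L2 L1 L2.

Definition nash_eq (R : realType) (alpha N1 N2 L1 L2 : R) : Prop :=
  [/\ 0 <= L1 <= N1, 0 <= L2 <= N2,
      (forall l1, 0 <= l1 <= N1 -> U1 alpha l1 L2 <= U1 alpha L1 L2) &
      (forall l2, 0 <= l2 <= N2 -> U2 alpha L1 l2 <= U2 alpha L1 L2)].

Definition x_eq (R : realType) (alpha N1 x : R) : Prop :=
  N1 = x * (alpha / (2 * (1 + x `^ (alpha / 2)) * ln (1 + x `^ (- (alpha / 2)))) - 1).

(* Main.v *)
Require Import Defs.
From HB Require Import structures.
From mathcomp Require Import all_boot all_order all_algebra.
From mathcomp Require Import all_classical all_reals all_analysis.
From mathcomp Require Import ring lra.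
Import Order.TTheory GRing.Theory Num.Theory.
Import numFieldNormedType.Exports.
Local Open Scope classical_set_scope.
Local Open Scope ring_scope.
Ltac nz := repeat match goal with |- is_true (_ && _) => apply/andP; split end;
  try (apply: lt0r_neq0; lra); try done.

Lemma is_derive_comp1 {R : realType} (f g : R -> R) (x df dg : R) :
  is_derive x 1 f df -> is_derive (f x) 1 g dg ->
  is_derive x 1 (fun y => g (f y)) (dg * df).
Proof.
move=> hf hg.
have df1 : derivable f x 1 by case: hf.
have dg1 : derivable g (f x) 1 by case: hg.
apply: DeriveDef.
  apply/derivable1_diffP; apply: differentiable_comp; exact/derivable1_diffP.
rewrite -derive1E.
have -> : (fun y => g (f y)) = g \o f by [].
rewrite derive1_comp // !derive1E.
by rewrite (@derive_val _ _ _ _ _ _ _ hf) (@derive_val _ _ _ _ _ _ _ hg).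
Qed.

Lemma is_derive_cont {R : realType} (f : R -> R) (x df : R) :
  is_derive x 1 f df -> {for x, continuous f}.
Proof.
case=> hd _; apply: differentiable_continuous; exact/derivable1_diffP.
Qed.

Lemma ln_lt_sub1 {R : realType} (x : R) : 0 < x -> x != 1 -> ln x < x - 1.
Proof.
move=> x0 x1.
have h : ln x != 0 by rewrite ln_eq0.
have := expR_gt1Dx h; rewrite lnK ?posrE // => H.
by rewrite ltrBrDl.
Qed.

Lemma ln1D_lt {R : realType} (t : R) : 0 < t -> ln (1 + t) < t.
Proof.
move=> t0.
have h1 : 0 < 1 + t by lra.
have h2 : 1 + t != 1 by rewrite gt_eqF //; lra.
have := @ln_lt_sub1 R (1 + t) h1 h2.
by have -> : 1 + t - 1 = t by ring.
Qed.

Lemma strict_decr {R : realType} (f df : R -> R) (lo : R) :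
  (forall x, lo < x -> is_derive x 1 f (df x)) ->
  forall x1 x2, lo < x1 -> x1 < x2 -> (forall z, x1 < z -> z < x2 -> df z < 0) ->
  f x2 < f x1.
Proof.
move=> hd x1 x2 l1 l12 hneg.
have hdz : forall x, x \in `]x1, x2[ -> is_derive x 1 f (df x).
  move=> x; rewrite in_itv /= => /andP[h1 h2]; apply: hd; lra.
have hc : {within `[x1, x2], continuous f}.
  apply: continuous_in_subspaceT => x; rewrite inE /= in_itv /= => /andP[h1 h2].
  apply: (@is_derive_cont R f x (df x)); apply: hd; lra.
have [c] := MVT l12 hdz hc.
rewrite in_itv /= => /andP[c1 c2] E.
have : df c * (x2 - x1) < 0.
  rewrite pmulr_llt0; [exact: hneg | lra].
lra.
Qed.

Lemma strict_incr {R : realType} (f df : R -> R) (lo : R) :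
  (forall x, lo < x -> is_derive x 1 f (df x)) ->
  forall x1 x2, lo < x1 -> x1 < x2 -> (forall z, x1 < z -> z < x2 -> 0 < df z) ->
  f x1 < f x2.
Proof.
move=> hd x1 x2 l1 l12 hpos.
have hd' : forall x, lo < x -> is_derive x 1 (fun y => - f y) (- df x).
  by move=> x /hd h; apply: is_deriveN.
have := @strict_decr R (fun y => - f y) (fun y => - df y) lo hd' x1 x2 l1 l12.
rewrite ltrN2; apply => z h1 h2; rewrite oppr_lt0; exact: hpos.
Qed.

Lemma is_derive_inv {R : realType} (x : R) : x != 0 ->
  is_derive x 1 (fun y : R => y^-1) (- (x ^+ 2)^-1).
Proof.
move=> x0.
have hid : derivable (@id R) x 1 by apply: derivable_id.
apply: DeriveDef; first exact: (@derivableV _ _ id).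
rewrite (@deriveV _ _ id) // derive_id /=.
by rewrite /GRing.scale /= mulr1.
Qed.

Lemma powRV {R : realType} (x r : R) : 0 < x -> (x^-1) `^ r = (x `^ r)^-1.
Proof.
by move=> x0; rewrite /powR invr_eq0 gt_eqF // lnV ?posrE // mulrN expRN.
Qed.

Lemma powR_invK {R : realType} (y a : R) : 0 < y -> a != 0 ->
  (y `^ a) `^ (a^-1) = y.
Proof.
by move=> y0 a0; rewrite -powRrM divff // powRr1 // ltW.
Qed.

Lemma is_deriveM1 {R : realType} (f g : R -> R) (x df dg : R) :
  is_derive x 1 f df -> is_derive x 1 g dg ->
  is_derive x 1 (fun y => f y * g y) (f x * dg + g x * df).
Proof. by move=> hf hg; have := is_deriveM hf hg. Qed.

Lemma is_deriveD1 {R : realType} (f g : R -> R) (x df dg : R) :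
  is_derive x 1 f df -> is_derive x 1 g dg ->
  is_derive x 1 (fun y => f y + g y) (df + dg).
Proof. by move=> hf hg; have := is_deriveD hf hg. Qed.

Lemma is_derive_cst1 {R : realType} (c x : R) : is_derive x 1 (fun _ : R => c) 0.
Proof. exact: is_derive_cst. Qed.

Lemma is_derive_id1 {R : realType} (x : R) : is_derive x 1 (fun y : R => y) 1.
Proof. exact: is_derive_id. Qed.

Definition hD {R : realType} (Y : R) := (1 + Y) * ln (1 + Y^-1).

Lemma hD_derive {R : realType} (Y : R) : 0 < Y ->
  is_derive Y 1 hD (ln (1 + Y^-1) - Y^-1).
Proof.
move=> Y0.
have Yn0 : Y != 0 by rewrite gt_eqF.
have h1 := @is_deriveD1 R (fun _ => 1) (fun y => y^-1) Y 0 _ (is_derive_cst1 1 Y) (@is_derive_inv R Y Yn0).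
have hpos : 0 < 1 + Y^-1 by rewrite ltr_wpDr // ?invr_ge0 ?ltW.
have h2 := @is_derive_comp1 R _ _ _ _ _ h1 (@is_derive1_ln R _ hpos).
have h3 := @is_deriveD1 R (fun _ => 1) (fun y => y) Y 0 1 (is_derive_cst1 1 Y) (is_derive_id1 Y).
have H := @is_deriveM1 R (fun y => 1 + y) (fun y => ln (1 + y^-1)) _ _ _ h3 h2.
rewrite /hD; apply: (is_derive_eq H).
have hn0 : 1 + Y^-1 != 0 by rewrite gt_eqF.
field.
by rewrite Yn0 /= gt_eqF //; lra.
Qed.

Lemma hD_decr {R : realType} {Y1 Y2 : R} : 0 < Y1 -> Y1 < Y2 -> hD Y2 < hD Y1.
Proof.
move=> h1 h12.
apply: (@strict_decr R hD (fun Y => ln (1 + Y^-1) - Y^-1) 0) => //.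
  by move=> x x0; apply: hD_derive.
move=> z z1 z2; rewrite subr_lt0; apply: ln1D_lt; rewrite invr_gt0; lra.
Qed.

Definition Lg {R : realType} (a y : R) := ln (1 + (y `^ a)^-1).
Definition Phi {R : realType} (a y : R) := y * (a / hD (y `^ a) - 1).
Definition Kf {R : realType} (a c y : R) := y * Lg a y * expR (- c / y).

Lemma Lg_gt0 {R : realType} (a y : R) : 0 < y -> 0 < Lg a y.
Proof.
move=> y0; rewrite /Lg ln_gt0 // ltrDl invr_gt0 powR_gt0 //.
Qed.

Lemma Kf_derive {R : realType} (a c y : R) : 0 < y -> 0 < a ->
  is_derive y 1 (Kf a c) (expR (- c / y) * (Lg a y / y) * (c - Phi a y)).
Proof.
move=> y0 a0.
have Y0 : 0 < y `^ a by rewrite powR_gt0.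
have Yn0 : y `^ a != 0 by rewrite gt_eqF.
have yn0 : y != 0 by rewrite gt_eqF.
have hp : is_derive y 1 (fun z : R => z `^ a) (a * y `^ (a - 1)) by apply: is_derive1_powR.
have hi := @is_derive_comp1 R _ _ _ _ _ hp (@is_derive_inv R (y `^ a) Yn0).
have h1 := @is_deriveD1 R (fun _ => 1) (fun z => (z `^ a)^-1) y 0 _ (is_derive_cst1 1 y) hi.
have hpos : 0 < 1 + (y `^ a)^-1 by rewrite ltr_wpDr // ?invr_ge0 ?ltW.
have hL := @is_derive_comp1 R _ _ _ _ _ h1 (@is_derive1_ln R _ hpos).
have hyL := @is_deriveM1 R (fun z => z) (fun z => ln (1 + (z `^ a)^-1)) _ _ _ (is_derive_id1 y) hL.
have hg := @is_deriveM1 R (fun _ => - c) (fun z => z^-1) _ _ _ (is_derive_cst1 (- c) y) (@is_derive_inv R y yn0).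
have hE := @is_derive_comp1 R _ _ _ _ _ hg (is_derive_expR _).
have H := @is_deriveM1 R _ _ _ _ _ hyL hE.
rewrite /Kf /Lg; apply: (is_derive_eq H).
have hP : y `^ (a - 1) = y `^ a / y.
  by rewrite -(mulr_powRB1 (ltW y0) a0); field.
rewrite /Phi /hD hP.
have hL0 : 0 < ln (1 + (y `^ a)^-1) by rewrite ln_gt0 // ltrDl invr_gt0.
set L := ln (1 + (y `^ a)^-1) in hL0 *.
set Y := y `^ a in Y0 Yn0 hpos hL0 *.
set E := expR _.
have Ln0 : L != 0 by rewrite gt_eqF.
have h1Y : 1 + Y != 0 by rewrite gt_eqF //; lra.
have h1Yi : 1 + Y^-1 != 0 by rewrite gt_eqF.
rewrite /=.
field.
by rewrite Ln0 h1Y yn0 Yn0.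
Qed.

Lemma hD_gt1 {R : realType} {Y : R} : 0 < Y -> 1 < hD Y.
Proof.
move=> Y0; rewrite /hD.
have q0 : 0 < Y / (1 + Y) by rewrite divr_gt0 //; lra.
have q1 : Y / (1 + Y) != 1.
  rewrite lt_eqF // ltr_pdivrMr; lra.
have := @ln_lt_sub1 R _ q0 q1.
have -> : Y / (1 + Y) = (1 + Y^-1)^-1.
  by field; nz.
have hp : 0 < 1 + Y^-1 by rewrite ltr_wpDr // ?invr_ge0 ?ltW.
rewrite lnV ?posrE //.
have -> : (1 + Y^-1)^-1 - 1 = - (1 + Y)^-1.
  by field; nz.
rewrite ltrN2 => H.
have Y1 : 0 < 1 + Y by lra.
by rewrite -ltr_pdivrMl // mulr1.
Qed.

Lemma hD_le {R : realType} {Y : R} : 0 < Y -> hD Y <= (1 + Y) / Y.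
Proof.
move=> Y0; rewrite /hD ler_pM2l; last by lra.
apply: le_ln1Dx; have : 0 < Y^-1 by rewrite invr_gt0.
lra.
Qed.

Definition Aa {R : realType} (a y : R) := a / hD (y `^ a) - 1.

Lemma Aa_incr {R : realType} {a y1 y2 : R} : 0 < a -> 0 < y1 -> y1 < y2 ->
  Aa a y1 < Aa a y2.
Proof.
move=> a0 y10 y12.
have Y1 : 0 < y1 `^ a by rewrite powR_gt0.
have Y12 : y1 `^ a < y2 `^ a.
  by apply: gt0_ltr_powR => //; rewrite nnegrE; lra.
have h := hD_decr Y1 Y12.
have h1 := hD_gt1 Y1.
have h2 := hD_gt1 (lt_trans Y1 Y12).
rewrite /Aa ltrD2r ltr_pM2l // ltf_pV2 ?posrE //; lra.
Qed.

Lemma Aa_lt {R : realType} {a y : R} : 0 < a -> 0 < y -> Aa a y < a - 1.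
Proof.
move=> a0 y0; have h := hD_gt1 (powR_gt0 a y0).
rewrite /Aa ltrD2r gtr_pMr // invf_lt1 //; lra.
Qed.

Lemma Phi_lt {R : realType} {a y : R} : 0 < a -> a < 2 -> 0 < y -> Phi a y < y.
Proof.
move=> a0 a2 y0; have h := Aa_lt a0 y0.
rewrite /Phi -/(Aa a y).
have : Aa a y < 1 by lra.
by move=> h1; rewrite gtr_pMr.
Qed.

Lemma Phi_sign {R : realType} {a c ys : R} : 0 < a -> 0 < c -> 0 < ys ->
  Phi a ys = c ->
  (forall y, 0 < y -> y < ys -> Phi a y < c) /\ (forall y, ys < y -> c < Phi a y).
Proof.
move=> a0 c0 ys0 E; rewrite /Phi -/(Aa a ys) in E.
have Apos : 0 < Aa a ys.
  by move: c0; rewrite -E pmulr_rgt0.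
split.
- move=> y y0 yys; rewrite /Phi -/(Aa a y) -E.
  have hA := Aa_incr a0 y0 yys.
  case: (lerP (Aa a y) 0) => hA0.
    have : y * Aa a y <= 0 by rewrite pmulr_rle0.
    have : 0 < ys * Aa a ys by rewrite pmulr_rgt0.
    lra.
  apply: (@lt_trans _ _ (ys * Aa a y)).
    by rewrite ltr_pM2r.
  by rewrite ltr_pM2l.
- move=> y yys; rewrite /Phi -/(Aa a y) -E.
  have hA := Aa_incr a0 ys0 yys.
  apply: (@lt_trans _ _ (ys * Aa a y)).
    by rewrite ltr_pM2l.
  rewrite ltr_pM2r //; lra.
Qed.

Lemma Phi_cont {R : realType} (a y : R) : 0 < y -> {for y, continuous (Phi a)}.
Proof.
move=> y0.
have Y0 : 0 < y `^ a by rewrite powR_gt0.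
have hp : is_derive y 1 (fun z : R => z `^ a) (a * y `^ (a - 1)) by apply: is_derive1_powR.
have hh := @is_derive_comp1 R _ _ _ _ _ hp (@hD_derive R _ Y0).
have hn : hD (y `^ a) != 0 by rewrite gt_eqF // (lt_trans ltr01 (hD_gt1 Y0)).
have hi := @is_derive_comp1 R _ _ _ _ _ hh (@is_derive_inv R _ hn).
have hm := @is_deriveM1 R (fun _ => a) (fun z => (hD (z `^ a))^-1) _ _ _ (is_derive_cst1 a y) hi.
have hs := @is_deriveD1 R (fun z => a * (hD (z `^ a))^-1) (fun _ => -1) _ _ _ hm (is_derive_cst1 (-1) y).
have H := @is_deriveM1 R (fun z => z) _ _ _ _ (is_derive_id1 y) hs.
exact: (@is_derive_cont R _ _ _ H).
Qed.

Lemma Phi_root {R : realType} (a c : R) : 1 < a -> a < 2 -> 0 < c ->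
  exists ys, 0 < ys /\ Phi a ys = c.
Proof.
move=> a1 a2 c0.
set ylo := expR (-1) : R.
set yhi := 1 + 3 * (1 + c) / (a - 1).
have ylo0 : 0 < ylo by apply: expR_gt0.
have ylo1 : ylo < 1 by rewrite /ylo expR_lt1; lra.
have q0 : 0 < 3 * (1 + c) / (a - 1) by apply: divr_gt0; lra.
have yhiE : yhi = 1 + 3 * (1 + c) / (a - 1) by [].
have hlo : Phi a ylo < c.
  suff : Aa a ylo < 0.
    move=> h; rewrite /Phi -/(Aa a ylo).
    have : ylo * Aa a ylo < 0 by rewrite pmulr_rlt0.
    lra.
  rewrite /Aa subr_lt0.
  have hY : ylo `^ a = expR (- a).
    by rewrite /ylo -expRM mulN1r.
  have hD1 : a < hD (ylo `^ a).
    rewrite hY /hD -expRN opprK.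
    have e0 : 0 < expR (- a) by apply: expR_gt0.
    have l1 : a < ln (1 + expR a).
      have ea : 0 < expR a := expR_gt0 a.
      rewrite -[X in X < _](expRK a) ltr_ln ?posrE; lra.
    have l0 : 0 < ln (1 + expR a) by lra.
    have : ln (1 + expR a) < (1 + expR (- a)) * ln (1 + expR a).
      by rewrite ltr_pMl // ltrDl.
    lra.
  rewrite ltr_pdivrMr; last by lra.
  by rewrite mul1r.
have hhi : c < Phi a yhi.
  have y1 : 1 <= yhi by lra.
  have Yy : yhi <= yhi `^ a by apply: le1r_powR; lra.
  set Y := yhi `^ a in Yy.
  have Y0 : 0 < Y by lra.
  have hle := hD_le Y0.
  have hDp : 0 < hD Y by apply: lt_trans (hD_gt1 Y0).
  have hA : (a - 1) / 3 <= Aa a yhi.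
    rewrite /Aa -/Y.
    have : a * Y / (1 + Y) <= a / hD Y.
      have hle' : Y * hD Y <= 1 + Y.
        by move: hle; rewrite ler_pdivlMr // mulrC.
      rewrite -subr_ge0.
      have -> : a / hD Y - a * Y / (1 + Y) = a * ((1 + Y) - Y * hD Y) / (hD Y * (1 + Y)).
        by field; nz.
      apply: divr_ge0.
        apply: mulr_ge0; lra.
      apply: mulr_ge0; lra.
    have hY3 : 3 <= (a - 1) * Y.
      have : 3 * (1 + c) / (a - 1) <= Y by lra.
      rewrite ler_pdivrMr; last by lra.
      move=> h; nra.
    have : (a - 1) / 3 <= a * Y / (1 + Y) - 1.
      rewrite -subr_ge0.
      have -> : a * Y / (1 + Y) - 1 - (a - 1) / 3 = (2 * a * Y - 2 * Y - 2 - a) / (3 * (1 + Y)).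
        by field; nz.
      apply: divr_ge0; nra.
    lra.
  rewrite /Phi -/(Aa a yhi).
  have : yhi * ((a - 1) / 3) <= yhi * Aa a yhi by rewrite ler_pM2l; lra.
  have : 1 + c <= yhi * ((a - 1) / 3).
    have -> : yhi * ((a - 1) / 3) = (a - 1) / 3 + (1 + c).
      rewrite /yhi; field; nz.
    have : 0 < (a - 1) / 3 by apply: divr_gt0; lra.
    lra.
  lra.
have lohi : ylo <= yhi by lra.
have hc : {within `[ylo, yhi], continuous (Phi a)}.
  apply: continuous_in_subspaceT => x; rewrite inE /= in_itv /= => /andP[h1 h2].
  apply: Phi_cont; lra.
have hv : Num.min (Phi a ylo) (Phi a yhi) <= c <= Num.max (Phi a ylo) (Phi a yhi).
  rewrite ge_min le_max; apply/andP; split; apply/orP; [left|right]; lra.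
have [ys] := IVT lohi hc hv.
rewrite in_itv /= => /andP[h1 _] E.
exists ys; split => //; lra.
Qed.

Lemma Kf_incr {R : realType} {a c ys y1 y2 : R} : 0 < a -> 0 < c -> 0 < ys ->
  Phi a ys = c -> 0 < y1 -> y1 < y2 -> y2 <= ys -> Kf a c y1 < Kf a c y2.
Proof.
move=> a0 c0 ys0 E y10 y12 y2s.
have [hlt _] := Phi_sign a0 c0 ys0 E.
apply: (@strict_incr R (Kf a c) (fun y => expR (- c / y) * (Lg a y / y) * (c - Phi a y)) 0) => //.
  by move=> x x0; apply: Kf_derive.
move=> z z1 z2.
have z0 : 0 < z by lra.
apply: mulr_gt0; first apply: mulr_gt0.
- exact: expR_gt0.
- by apply: divr_gt0 => //; apply: Lg_gt0.
- rewrite subr_gt0; apply: hlt => //; lra.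
Qed.

Lemma Kf_decr {R : realType} {a c ys y1 y2 : R} : 0 < a -> 0 < c -> 0 < ys ->
  Phi a ys = c -> ys <= y1 -> y1 < y2 -> Kf a c y2 < Kf a c y1.
Proof.
move=> a0 c0 ys0 E y1s y12.
have [_ hgt] := Phi_sign a0 c0 ys0 E.
apply: (@strict_decr R (Kf a c) (fun y => expR (- c / y) * (Lg a y / y) * (c - Phi a y)) 0) => //.
- by move=> x x0; apply: Kf_derive.
- lra.
move=> z z1 z2.
have z0 : 0 < z by lra.
rewrite pmulr_rlt0; first by rewrite subr_lt0; apply: hgt; lra.
apply: mulr_gt0; first exact: expR_gt0.
by apply: divr_gt0 => //; apply: Lg_gt0.
Qed.

Lemma Kf_gt0 {R : realType} (a c y : R) : 0 < y -> 0 < Kf a c y.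
Proof.
move=> y0; rewrite /Kf; apply: mulr_gt0; last exact: expR_gt0.
by apply: mulr_gt0 => //; apply: Lg_gt0.
Qed.

Lemma Kf_le {R : realType} {a c ys : R} (y : R) : 0 < a -> 0 < c -> 0 < ys ->
  Phi a ys = c -> 0 < y -> Kf a c y <= Kf a c ys.
Proof.
move=> a0 c0 ys0 E y0.
case: (ltgtP y ys) => h.
- by apply: ltW; apply: (Kf_incr a0 c0 ys0 E).
- by apply: ltW; apply: (Kf_decr a0 c0 ys0 E).
- by rewrite h.
Qed.

Definition psi {R : realType} (z : R) := z * expR (- z).

Lemma psi_le {R : realType} (z : R) : psi z <= expR (-1).
Proof.
rewrite /psi.
have h := expR_ge1Dx (z - 1).
have -> : expR (-1) = expR (z - 1) * expR (- z).
  by rewrite -expRD; congr expR; ring.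
rewrite ler_pM2r ?expR_gt0 //; lra.
Qed.

Lemma psi1 {R : realType} : psi 1 = expR (-1) :> R.
Proof. by rewrite /psi mul1r. Qed.

Lemma psi_ge0 {R : realType} (z : R) : 0 <= z -> 0 <= psi z.
Proof. by move=> z0; rewrite /psi mulr_ge0 // ltW // expR_gt0. Qed.

Lemma psi_derive {R : realType} (z : R) : is_derive z 1 psi (expR (- z) * (1 - z)).
Proof.
have hg := @is_derive_comp1 R (fun y => - y) expR z (-1) (expR (- z)) _ (is_derive_expR _).
have hn : is_derive z 1 (fun y : R => - y) (-1).
  have := @is_deriveN _ _ _ (fun y : R => y) z 1 1 (is_derive_id1 z).
  by [].
have H := @is_deriveM1 R (fun y => y) (fun y => expR (- y)) _ _ _ (is_derive_id1 z) (hg hn).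
rewrite /psi; apply: (is_derive_eq H); ring.
Qed.

Lemma psi_incr {R : realType} (z1 z2 : R) : 0 <= z1 -> z1 < z2 -> z2 <= 1 -> psi z1 < psi z2.
Proof.
move=> h1 h12 h2.
apply: (@strict_incr R psi (fun z => expR (- z) * (1 - z)) (-1)) => //.
- by move=> x _; apply: psi_derive.
- lra.
move=> z a1 a2; apply: mulr_gt0; [exact: expR_gt0 | lra].
Qed.

Lemma psi_decr {R : realType} (z1 z2 : R) : 1 <= z1 -> z1 < z2 -> psi z2 < psi z1.
Proof.
move=> h1 h12.
apply: (@strict_decr R psi (fun z => expR (- z) * (1 - z)) (-1)) => //.
- by move=> x _; apply: psi_derive.
- lra.
move=> z a1 a2; rewrite pmulr_rlt0 ?expR_gt0 //; lra.
Qed.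

Lemma psi_lt {R : realType} (z : R) : z != 1 -> psi z < expR (-1).
Proof.
move=> z1; rewrite -psi1.
case: (ltgtP z 1) => h.
- case: (ltP z 0) => h0.
    have : psi z < 0 by rewrite /psi pmulr_llt0 ?expR_gt0.
    have : 0 < psi (1 : R) by rewrite psi1 expR_gt0.
    lra.
  by apply: psi_incr.
- by apply: psi_decr.
- by move: z1; rewrite h eqxx.
Qed.

Definition V {R : realType} (a l T y : R) := l * Lg a y * expR (- T / y).

Lemma V_split {R : realType} (a c l y : R) : 0 < y ->
  V a l (c + l) y = Kf a c y * psi (l / y).
Proof.
move=> y0; rewrite /V /Kf /psi.
have -> : - (c + l) / y = - c / y + - (l / y) by field; nz.
rewrite expRD.
set E1 := expR (- c / y); set E2 := expR (- (l / y)).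
field; nz.
Qed.

Lemma ea_1 {R : realType} (alpha : R) : 0 < alpha -> 2 / alpha * (alpha / 2) = 1.
Proof. by move=> h; field; nz. Qed.

Lemma ae_1 {R : realType} (alpha : R) : 0 < alpha -> alpha / 2 * (2 / alpha) = 1.
Proof. by move=> h; field; nz. Qed.

Lemma elem_to_V {R : realType} (alpha l T b : R) : 0 < alpha -> 0 < b ->
  l * ln (1 + b) * expR (- T * b `^ (2 / alpha)) =
  V (alpha / 2) l T ((b `^ (2 / alpha))^-1).
Proof.
move=> al0 b0.
have be : 0 < b `^ (2 / alpha) by rewrite powR_gt0.
rewrite /V /Lg powRV // -powRrM ea_1 // powRr1 ?ltW // !invrK.
by [].
Qed.

Lemma V_to_elem {R : realType} (alpha l T y : R) : 0 < alpha -> 0 < y ->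
  V (alpha / 2) l T y =
  l * ln (1 + (y `^ (alpha / 2))^-1) * expR (- T * ((y `^ (alpha / 2))^-1) `^ (2 / alpha)).
Proof.
move=> al0 y0.
have Y0 : 0 < y `^ (alpha / 2) by rewrite powR_gt0.
by rewrite /V /Lg powRV // -powRrM ae_1 // powRr1 ?ltW //.
Qed.

Lemma pay_ub {R : realType} (alpha l L1 L2 B : R) : 0 < alpha ->
  (forall y, 0 < y -> V (alpha / 2) l (L1 + L2) y <= B) ->
  rag_payoff alpha l L1 L2 <= B.
Proof.
move=> al0 H; rewrite /rag_payoff; apply: ge_sup.
  by exists (l * ln (1 + 1) * expR (- (L1 + L2) * 1 `^ (2 / alpha))); exists 1.
move=> v [b b0 ->]; rewrite elem_to_V //; apply: H.
by rewrite invr_gt0 powR_gt0.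
Qed.

Lemma pay_lb {R : realType} (alpha l L1 L2 B : R) : 0 < alpha ->
  (forall y, 0 < y -> V (alpha / 2) l (L1 + L2) y <= B) ->
  forall y, 0 < y -> V (alpha / 2) l (L1 + L2) y <= rag_payoff alpha l L1 L2.
Proof.
move=> al0 H y y0.
have hub : has_ubound [set y : R | exists2 b : R, 0 < b &
        y = l * ln (1 + b) * expR (- (L1 + L2) * b `^ (2 / alpha))].
  exists B => v [b b0 ->]; rewrite elem_to_V //; apply: H.
  by rewrite invr_gt0 powR_gt0.
rewrite /rag_payoff; apply: (ub_le_sup hub).
exists ((y `^ (alpha / 2))^-1); first by rewrite invr_gt0 powR_gt0.
exact: V_to_elem.
Qed.

Lemma V_bound {R : realType} {alpha c ys : R} (l y : R) : 0 < alpha -> 0 < c -> 0 < ys ->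
  Phi (alpha / 2) ys = c -> 0 <= l -> 0 < y ->
  V (alpha / 2) l (c + l) y <= Kf (alpha / 2) c ys * expR (-1).
Proof.
move=> al0 c0 ys0 E l0 y0.
have a0 : 0 < alpha / 2 by apply: divr_gt0.
rewrite V_split //.
apply: ler_pM.
- exact/ltW/Kf_gt0.
- by apply: psi_ge0; apply: divr_ge0 => //; apply: ltW.
- exact: Kf_le.
- exact: psi_le.
Qed.

Definition Qp {R : realType} (alpha c l : R) := rag_payoff alpha l c l.

Lemma Q_le {R : realType} {alpha c ys : R} (l : R) : 0 < alpha -> 0 < c -> 0 < ys ->
  Phi (alpha / 2) ys = c -> 0 <= l ->
  Qp alpha c l <= Kf (alpha / 2) c ys * expR (-1).
Proof.
move=> al0 c0 ys0 E l0; rewrite /Qp; apply: pay_ub => // y y0.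
exact: V_bound.
Qed.

Lemma Q_lbV {R : realType} {alpha c ys : R} (l y : R) : 0 < alpha -> 0 < c -> 0 < ys ->
  Phi (alpha / 2) ys = c -> 0 <= l -> 0 < y ->
  V (alpha / 2) l (c + l) y <= Qp alpha c l.
Proof.
move=> al0 c0 ys0 E l0 y0; rewrite /Qp; apply: (@pay_lb R alpha l c l (Kf (alpha / 2) c ys * expR (-1)) al0 _ y y0).
move=> z z0; exact: (V_bound l z al0 c0 ys0 E l0 z0).
Qed.

Lemma Q_at {R : realType} {alpha c ys : R} (y : R) : 0 < alpha -> 0 < c -> 0 < ys ->
  Phi (alpha / 2) ys = c -> 0 < y ->
  Kf (alpha / 2) c y * expR (-1) <= Qp alpha c y.
Proof.
move=> al0 c0 ys0 E y0.
have := Q_lbV y y al0 c0 ys0 E (ltW y0) y0.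
by rewrite V_split // divff ?gt_eqF // psi1.
Qed.

Lemma Q_ys {R : realType} {alpha c ys : R} : 0 < alpha -> 0 < c -> 0 < ys ->
  Phi (alpha / 2) ys = c -> Qp alpha c ys = Kf (alpha / 2) c ys * expR (-1).
Proof.
move=> al0 c0 ys0 E; apply/eqP; rewrite eq_le.
by rewrite (Q_le ys al0 c0 ys0 E (ltW ys0)) (Q_at ys al0 c0 ys0 E ys0).
Qed.

Lemma Q_decr {R : realType} {alpha c ys : R} (l : R) : 0 < alpha -> 0 < c -> 0 < ys ->
  Phi (alpha / 2) ys = c -> ys < l ->
  Qp alpha c l < Kf (alpha / 2) c ys * expR (-1).
Proof.
move=> al0 c0 ys0 E ysl.
have a0 : 0 < alpha / 2 by apply: divr_gt0.
set y1 := (ys + l) / 2.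
have y1E : y1 = (ys + l) / 2 by [].
have hy1 : ys < y1 by lra.
have hy1' : y1 < l by lra.
have y10 : 0 < y1 by lra.
have l0 : 0 < l by lra.
set B1 := Kf (alpha / 2) c ys * psi (l / y1).
set B2 := Kf (alpha / 2) c y1 * expR (-1).
have Kys := @Kf_gt0 R (alpha / 2) c ys ys0.
have hB1 : B1 < Kf (alpha / 2) c ys * expR (-1).
  rewrite /B1 ltr_pM2l //; apply: psi_lt.
  by rewrite gt_eqF // ltr_pdivlMr // mul1r.
have hB2 : B2 < Kf (alpha / 2) c ys * expR (-1).
  rewrite /B2 ltr_pM2r ?expR_gt0 //.
  exact: (Kf_decr a0 c0 ys0 E (lexx ys) hy1).
apply: (@le_lt_trans _ _ (Num.max B1 B2)); last by rewrite gt_max hB1 hB2.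
rewrite /Qp; apply: pay_ub => // y y0.
rewrite V_split //.
case: (lerP y y1) => hy.
- apply: (@le_trans _ _ B1); last by rewrite le_max lexx.
  apply: ler_pM.
  + exact/ltW/Kf_gt0.
  + by apply: psi_ge0; apply: divr_ge0; apply: ltW.
  + exact: Kf_le.
  + have q1 : 1 <= l / y1 by rewrite ler_pdivlMr // mul1r ltW.
    have q2 : l / y1 <= l / y by rewrite ler_pM2l // lef_pV2 ?posrE.
    case: (ltgtP (l / y1) (l / y)) q2 => // h _.
      exact/ltW/psi_decr.
    by rewrite h.
- apply: (@le_trans _ _ B2); last by rewrite le_max lexx orbT.
  apply: ler_pM.
  + exact/ltW/Kf_gt0.
  + by apply: psi_ge0; apply: divr_ge0; apply: ltW.
  + exact/ltW/(Kf_decr a0 c0 ys0 E (ltW hy1) hy).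
  + exact: psi_le.
Qed.

Lemma Q_incr {R : realType} {alpha c ys : R} (l l' : R) : 0 < alpha -> 0 < c -> 0 < ys ->
  Phi (alpha / 2) ys = c -> 0 <= l -> l < l' -> l' <= ys ->
  Qp alpha c l < Qp alpha c l'.
Proof.
move=> al0 c0 ys0 E l0 ll' l's.
have a0 : 0 < alpha / 2 by apply: divr_gt0.
have l'0 : 0 < l' by lra.
set y1 := (l + l') / 2.
have y1E : y1 = (l + l') / 2 by [].
have hy1 : l < y1 by lra.
have hy1' : y1 < l' by lra.
have y10 : 0 < y1 by lra.
set K := Kf (alpha / 2) c.
have Kl' : 0 < K l' by apply: Kf_gt0.
have Qlb := Q_at l' al0 c0 ys0 E l'0.
have Qp0 : 0 < Qp alpha c l'.
  by apply: lt_le_trans Qlb; rewrite mulr_gt0 // expR_gt0.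
set r := l / l'.
have r0 : 0 <= r by apply: divr_ge0 => //; lra.
have r1 : r < 1 by rewrite ltr_pdivrMr // mul1r.
set th := psi r / expR (-1).
have th0 : 0 <= th by apply: divr_ge0; [exact: psi_ge0 | exact/ltW/expR_gt0].
have th1 : th < 1.
  rewrite ltr_pdivrMr ?expR_gt0 // mul1r; apply: psi_lt; by rewrite lt_eqF.
set B1 := K l' * psi (l / y1).
set B2 := K y1 * expR (-1).
have hB1 : B1 < Qp alpha c l'.
  apply: lt_le_trans Qlb; rewrite /B1 ltr_pM2l //; apply: psi_lt.
  by rewrite lt_eqF // ltr_pdivrMr // mul1r.
have hB2 : B2 < Qp alpha c l'.
  apply: lt_le_trans Qlb; rewrite /B2 ltr_pM2r ?expR_gt0 //.
  exact: (Kf_incr a0 c0 ys0 E y10 hy1' l's).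
have hB0 : th * Qp alpha c l' < Qp alpha c l' by rewrite gtr_pMl.
apply: (@le_lt_trans _ _ (Num.max (th * Qp alpha c l') (Num.max B1 B2)));
  last by rewrite !gt_max hB0 hB1 hB2.
rewrite /Qp; apply: pay_ub => // y y0.
case: (lerP l' y) => hy.
  apply: (@le_trans _ _ (th * Qp alpha c l')); last by rewrite le_max lexx.
  apply: (@le_trans _ _ (th * V (alpha / 2) l' (c + l') y)); last first.
    by apply: ler_wpM2l => //; exact: (@Q_lbV R alpha c ys l' y al0 c0 ys0 E (ltW l'0) y0).
  rewrite (V_split (alpha / 2) c l y y0) (V_split (alpha / 2) c l' y y0) [X in _ <= X]mulrCA ler_wpM2l //; first exact/ltW/Kf_gt0.
  rewrite /th /psi /r.
  have ey : (l' - l) / y <= (l' - l) / l'.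
    by rewrite ler_pM2l ?lef_pV2 ?posrE //; lra.
  have ee : expR ((l' - l) / y) <= expR ((l' - l) / l') by rewrite ler_expR.
  have -> : l / y * expR (- (l / y)) = (l / l') * expR ((l' - l) / y) * (l' / y * expR (- (l' / y))).
    have e : expR (- (l / y)) = expR ((l' - l) / y) * expR (- (l' / y)).
      by rewrite -expRD; congr expR; field; nz.
    rewrite e; field; nz.
  have -> : l / l' * expR (- (l / l')) / expR (-1) = l / l' * expR ((l' - l) / l').
    have e : expR (- (l / l')) / expR (-1) = expR ((l' - l) / l').
      by rewrite -expRN -expRD; congr expR; field; nz.
    by rewrite -mulrA e.
  apply: ler_wpM2r.
    apply: mulr_ge0; [apply: divr_ge0; lra | exact/ltW/expR_gt0].
  by apply: ler_wpM2l => //.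
rewrite V_split //.
case: (lerP y1 y) => hy2.
  apply: (@le_trans _ _ B1); last by rewrite !le_max lexx orbT.
  apply: ler_pM.
  + exact/ltW/Kf_gt0.
  + by apply: psi_ge0; apply: divr_ge0 => //; apply: ltW.
  + case: (ltgtP y l') hy => // h _; first exact/ltW/(Kf_incr a0 c0 ys0 E y0 h l's).
  + have q2 : l / y <= l / y1 by rewrite ler_wpM2l // lef_pV2 ?posrE.
    have q1 : l / y1 < 1 by rewrite ltr_pdivrMr // mul1r.
    case: (ltgtP (l / y) (l / y1)) q2 => // h _.
      by apply/ltW/psi_incr; [apply: divr_ge0; lra | exact: h | exact: ltW q1].
    by rewrite h.
apply: (@le_trans _ _ B2); last by rewrite !le_max lexx !orbT.
apply: ler_pM.
+ exact/ltW/Kf_gt0.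
+ by apply: psi_ge0; apply: divr_ge0 => //; apply: ltW.
+ apply/ltW/(Kf_incr a0 c0 ys0 E y0 hy2); lra.
+ exact: psi_le.
Qed.

Lemma min_cases {R : realType} (x y : R) :
  (Num.min x y = x /\ x <= y) \/ (Num.min x y = y /\ y < x).
Proof.
case: (lerP x y) => h; [left | right]; split => //; try exact: min_l.
Qed.

Lemma BR {R : realType} {alpha c ys N : R} (l : R) : 0 < alpha -> 0 < c -> 0 < ys ->
  Phi (alpha / 2) ys = c -> 0 <= l -> l <= N -> l != Num.min ys N ->
  Qp alpha c l < Qp alpha c (Num.min ys N).
Proof.
move=> al0 c0 ys0 E l0 lN ln.
case: (min_cases ys N) => [[hm h]|[hm h]]; rewrite hm in ln *.
- case: (ltgtP l ys) ln => // h1 _.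
    exact: (Q_incr l ys al0 c0 ys0 E l0 h1 (lexx ys)).
  by rewrite (Q_ys al0 c0 ys0 E); apply: (Q_decr l al0 c0 ys0 E h1).
- have h1 : l < N by rewrite lt_neqAle ln lN.
  exact: (Q_incr l N al0 c0 ys0 E l0 h1 (ltW h)).
Qed.

Lemma BR_le {R : realType} {alpha c ys N : R} (l : R) : 0 < alpha -> 0 < c -> 0 < ys ->
  Phi (alpha / 2) ys = c -> 0 <= l -> l <= N ->
  Qp alpha c l <= Qp alpha c (Num.min ys N).
Proof.
move=> al0 c0 ys0 E l0 lN.
case: (eqVneq l (Num.min ys N)) => [->//|h].
exact/ltW/(BR l al0 c0 ys0 E l0 lN h).
Qed.

Lemma pay_zero {R : realType} (alpha L1 L2 : R) : 0 < alpha ->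
  rag_payoff alpha 0 L1 L2 <= 0.
Proof.
move=> al0; apply: pay_ub => // y y0.
by rewrite /V !mul0r.
Qed.

Lemma pay_pos {R : realType} (alpha l L1 L2 : R) : 2 < alpha -> alpha < 4 ->
  0 < l -> 0 < L1 + L2 -> 0 < rag_payoff alpha l L1 L2.
Proof.
move=> a2 a4 l0 T0.
have al0 : 0 < alpha by lra.
set T := L1 + L2 in T0 *.
have c0 : 0 < T / 2 by apply: divr_gt0.
have [ys [ys0 E]] := @Phi_root R (alpha / 2) (T / 2) ltac:(lra) ltac:(lra) c0.
set M := Kf (alpha / 2) (T / 2) ys * expR (-1).
have hb : forall y, 0 < y -> V (alpha / 2) l (L1 + L2) y <= l / (T / 2) * M.
  move=> y y0.
  have -> : V (alpha / 2) l (L1 + L2) y = l / (T / 2) * V (alpha / 2) (T / 2) (T / 2 + T / 2) y.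
    rewrite /V -/T.
    have -> : T / 2 + T / 2 = T by field.
    field; nz.
  apply: ler_wpM2l; first by apply: divr_ge0; lra.
  exact: (V_bound (T / 2) y al0 c0 ys0 E (ltW c0) y0).
have := @pay_lb R alpha l L1 L2 _ al0 hb 1 ltr01.
apply: lt_le_trans.
rewrite /V; apply: mulr_gt0; last exact: expR_gt0.
by apply: mulr_gt0 => //; apply: Lg_gt0.
Qed.

Lemma x_eq_Phi {R : realType} (alpha N1 x : R) : 0 < alpha -> 0 < x ->
  (x_eq alpha N1 x <-> Phi (alpha / 2) x = N1).
Proof.
move=> al0 x0.
have Y0 : 0 < x `^ (alpha / 2) by rewrite powR_gt0.
have L0 : 0 < ln (1 + (x `^ (alpha / 2))^-1) by rewrite ln_gt0 // ltrDl invr_gt0.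
have -> : x_eq alpha N1 x = (N1 = Phi (alpha / 2) x).
  rewrite /x_eq /Phi /hD powRN; congr (_ = x * (_ - 1)).
  field; nz.
by split => [->|<-].
Qed.

Lemma U1_Qp {R : realType} (alpha l c : R) : U1 alpha l c = Qp alpha c l.
Proof. by rewrite /U1 /Qp /rag_payoff (addrC l c). Qed.

Lemma U2_Qp {R : realType} (alpha c l : R) : U2 alpha c l = Qp alpha c l.
Proof. by []. Qed.

Theorem theorem2 (R : realType) (alpha N1 N2 : R) :
  2 < alpha -> alpha < 4 -> 0 < N1 -> N1 <= N2 ->
  exists x : R,
    [/\ 0 < x, x_eq alpha N1 x,
        (forall y : R, 0 < y -> x_eq alpha N1 y -> y = x) &
        (forall L1 L2 : R,
            nash_eq alpha N1 N2 L1 L2 <-> (L1 = N1 /\ L2 = Num.min x N2))].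
Proof.
move=> a2 a4 N10 N12.
have al0 : 0 < alpha by lra.
have a1 : 1 < alpha / 2 by lra.
have a2' : alpha / 2 < 2 by lra.
have a0 : 0 < alpha / 2 by lra.
have [x [x0 Ex]] := Phi_root (alpha / 2) N1 a1 a2' N10.
have xN1 : N1 < x by have := Phi_lt a0 a2' x0; rewrite Ex.
have uniq : forall c ys y, 0 < c -> 0 < ys -> Phi (alpha / 2) ys = c ->
    0 < y -> Phi (alpha / 2) y = c -> y = ys.
  move=> c ys y c0 ys0 E y0 Ey.
  have [hl hg] := Phi_sign a0 c0 ys0 E.
  case: (ltgtP y ys) => h //.
    by have := hl y y0 h; lra.
  by have := hg y h; lra.
exists x; split => //.
- by apply/(@x_eq_Phi R alpha N1 x al0 x0).
- move=> y y0 /(@x_eq_Phi R alpha N1 y al0 y0) Ey.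
  exact: (uniq N1 x y N10 x0 Ex y0 Ey).
move=> L1 L2; split.
- case=> /andP[L10 L1N] /andP[L20 L2N] H1 H2.
  have L1p : 0 < L1.
    rewrite lt_neqAle L10 andbT; apply/negP => /eqP h0.
    have := H1 N1 ltac:(apply/andP; split; lra).
    rewrite /U1 -h0.
    have := pay_zero alpha 0 L2 al0.
    have := pay_pos alpha N1 N1 L2 a2 a4 N10 ltac:(lra).
    lra.
  have L2p : 0 < L2.
    rewrite lt_neqAle L20 andbT; apply/negP => /eqP h0.
    have := H2 N2 ltac:(apply/andP; split; lra).
    rewrite /U2 -h0.
    have := pay_zero alpha L1 0 al0.
    have := pay_pos alpha N2 L1 N2 a2 a4 ltac:(lra) ltac:(lra).
    lra.
  have [ys2 [ys20 E2]] := Phi_root (alpha / 2) L1 a1 a2' L1p.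
  have [ys1 [ys10 E1]] := Phi_root (alpha / 2) L2 a1 a2' L2p.
  have hL2 : L2 = Num.min ys2 N2.
    apply/eqP; apply/negPn/negP => hne.
    have := BR L2 al0 L1p ys20 E2 L20 L2N hne.
    have hm0 : 0 <= Num.min ys2 N2 <= N2.
      by rewrite le_min ge_min lexx orbT andbT; apply/andP; split; lra.
    have := H2 (Num.min ys2 N2) hm0.
    rewrite !U2_Qp; lra.
  have hL1 : L1 = Num.min ys1 N1.
    apply/eqP; apply/negPn/negP => hne.
    have := BR L1 al0 L2p ys10 E1 L10 L1N hne.
    have hm0 : 0 <= Num.min ys1 N1 <= N1.
      by rewrite le_min ge_min lexx orbT andbT; apply/andP; split; lra.
    have := H1 (Num.min ys1 N1) hm0.
    rewrite !U1_Qp; lra.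
  have hL1N : L1 = N1.
    case: (min_cases ys1 N1) => [[hm h]|[hm h]]; rewrite hm in hL1; last by [].
    case: (eqVneq L1 N1) => // hne.
    have P1 : Phi (alpha / 2) L1 = L2 by rewrite hL1.
    have lt1 : L2 < L1 by rewrite -P1; apply: Phi_lt.
    case: (min_cases ys2 N2) => [[hm2 h2]|[hm2 h2]]; rewrite hm2 in hL2.
    + have P2 : Phi (alpha / 2) L2 = L1 by rewrite hL2.
      have : L1 < L2 by rewrite -{1}P2; apply: Phi_lt.
      lra.
    + have : L1 < N1 by rewrite lt_neqAle hne L1N.
      lra.
  split => //.
  rewrite hL1N in E2.
  by rewrite hL2 (uniq N1 x ys2 N10 x0 Ex ys20 E2).
- case=> -> ->.
  have c0 : 0 < Num.min x N2 by rewrite lt_min x0 /=; lra.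
  have cN1 : N1 <= Num.min x N2 by rewrite le_min; apply/andP; split; lra.
  split.
  + by apply/andP; split; lra.
  + by rewrite le_min ge_min lexx orbT andbT; apply/andP; split; lra.
  + move=> l1 /andP[l10 l1N].
    have [ys1 [ys10 E1]] := Phi_root (alpha / 2) (Num.min x N2) a1 a2' c0.
    have hys : N1 <= ys1.
      case: (lerP N1 ys1) => // h.
      have [_ hg] := Phi_sign a0 c0 ys10 E1.
      have := hg N1 h.
      have := Phi_lt a0 a2' N10.
      lra.
    have hm : Num.min ys1 N1 = N1 by apply: min_r.
    rewrite !U1_Qp -hm.
    exact: (BR_le l1 al0 c0 ys10 E1 l10 l1N).
  + move=> l2 /andP[l20 l2N].
    rewrite !U2_Qp.
    exact: (BR_le l2 al0 N10 x0 Ex l20 l2N).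
Qed.
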